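(* Let $q$ be a prime power and let $n_1,n_2$ be odd positive integers, each coprime to $q$. If every irreducible monic factor of $x^{n_1}-1$ and every irreducible monic factor of $x^{n_2}-1$ in $\mathbb{F}_{q^2}[x]$ is SCRIM, then every irreducible monic factor of $x^{n_1n_2}-1$ in $\mathbb{F}_{q^2}[x]$ is SCRIM.
   Context: $\mathbb{F}_{q^2}$ is the finite field with $q^2$ elements. For $\alpha\in\mathbb{F}_{q^2}$ put $\bar\alpha=\alpha^q$, and for $f(x)=\sum_i f_ix^i$ put $\overline{f(x)}=\sum_i \bar f_i x^i$. For $f(x)$ with $f(0)\neq 0$, $f^*(x)=x^{\deg f}f(0)^{-1}f(1/x)$ and $f^\dagger(x)=\overline{f^*(x)}$. A polynomial is SCRIM if it is monic, irreducible over $\mathbb{F}_{q^2}$, has nonzero constant term, and satisfies $f=f^\dagger$. *)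

(* Defs.v *)
From HB Require Import structures.
From mathcomp Require Import all_boot all_order all_algebra all_field.
Set Implicit Arguments. Unset Strict Implicit. Unset Printing Implicit Defensive.
Import GRing.Theory.
Local Open Scope ring_scope.

(* Conjugation on F_{q^2}: alpha |-> alpha^q, applied coefficientwise. *)
Definition conj_poly (F : fieldType) (q : nat) (f : {poly F}) : {poly F} :=
  map_poly (fun a : F => a ^+ q) f.

(* f^*(x) = x^{deg f} f(0)^{-1} f(1/x): the normalized reciprocal polynomial.
   Coefficient i of x^{deg f} f(1/x) is f_{deg f - i}. *)
Definition recip (F : fieldType) (f : {poly F}) : {poly F} :=
  (f`_0)^-1 *: \poly_(i < size f) f`_((size f).-1 - i).

Definition dagger (F : fieldType) (q : nat) (f : {poly F}) : {poly F} :=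
  conj_poly q (recip f).

Definition SCRIM (F : fieldType) (q : nat) (f : {poly F}) : Prop :=
  [/\ f \is monic, irreducible_poly f, f`_0 != 0 & f = dagger q f].

Definition prime_power (q : nat) : Prop :=
  exists p k : nat, [/\ prime p, (0 < k)%N & q = (p ^ k)%N].

Definition all_factors_SCRIM (F : fieldType) (q n : nat) : Prop :=
  forall f : {poly F}, f \is monic -> irreducible_poly f ->
    f %| 'X^n - 1 -> SCRIM q f.

(* Main.v *)
Require Import Defs.
From HB Require Import structures.
From mathcomp Require Import all_boot all_order all_algebra all_fingroup all_solvable all_field.
From mathcomp Require Import zify ring.
Set Implicit Arguments. Unset Strict Implicit. Unset Printing Implicit Defensive.
Import GRing.Theory.
Local Open Scope ring_scope.


Section Gal.
Variables (F : finFieldType) (L : splittingFieldType F).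
Local Notation pA := (map_poly (in_alg L)).

Lemma minP (f : {poly F}) (x : L) : f \is monic -> irreducible_poly f ->
  root (pA f) x -> minPoly 1 x = pA f.
Proof.
move=> mf irf rx.
have [g Dg] := polyOver1P (minPolyOver 1 x).
have dv : minPoly 1 x %| pA f.
  apply: minPoly_dvdp => //; apply/polyOver1P; by exists f.
have mg : g \is monic by rewrite -(map_monic (in_alg L)) -Dg monic_minPoly.
have szg : (1 < size g)%N.
  by rewrite -(size_map_poly (in_alg L)) -Dg size_minPoly.
move: dv; rewrite Dg dvdp_map => dv.
have /irf: (size g != 1)%N by rewrite neq_ltn szg orbT.
move=> /(_ dv); rewrite eqp_monic // => /eqP ->; done.
Qed.

Lemma galgen : exists s : gal_of {:L}, [/\ (s \in 'Gal({:L} / 1%VS))%g,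
   forall j (x : L), (s ^+ j)%g x = x ^+ (#|F| ^ j) &
   forall t, (t \in 'Gal({:L} / 1%VS))%g -> exists j, t = (s ^+ j)%g].
Proof.
have [s gen Ds] := finField_galois_generator (sub1v {:L}).
have Ds' x : s x = x ^+ #|F| by rewrite Ds ?memvf // dimv1 expn1.
exists s; split.
- by move: gen; rewrite /generator => /eqP ->; apply: cycle_id.
- elim=> [|j IH] x; first by rewrite expg0 gal_id expn0 expr1.
  by rewrite expgSr galM ?memvf // IH Ds' expnSr exprM.
- move=> t; move: gen; rewrite /generator => /eqP -> /cycleP [j ->].
  by exists j.
Qed.

Lemma conj_roots (f : {poly F}) (x y : L) : f \is monic -> irreducible_poly f ->
  root (pA f) x -> root (pA f) y -> exists j, y = x ^+ (#|F| ^ j).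
Proof.
move=> mf irf rx ry.
have mx := minP mf irf rx.
have [t gt ty] : exists2 t, (t \in 'Gal({:L} / 1%VS))%g & t x = y.
  apply: normalField_root_minPoly; rewrite ?sub1v ?memvf ?mx //.
  by have /and3P[] := finField_galois (sub1v {:L}).
have [s [_ Ds gs]] := galgen.
have [j Dt] := gs t gt; exists j; by rewrite -ty Dt Ds.
Qed.

Lemma root_pow (f : {poly F}) (x : L) j : f \is monic -> irreducible_poly f ->
  root (pA f) x -> root (pA f) (x ^+ (#|F| ^ j)).
Proof.
move=> mf irf rx.
have mx := minP mf irf rx.
have [s [gs Ds _]] := galgen.
rewrite -Ds -mx; apply: root_minPoly_gal; rewrite ?sub1v ?memvf //.
exact: groupX.
Qed.
End Gal.


Section Frob.
Variables (F : finFieldType) (L : splittingFieldType F).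
Local Notation pA := (map_poly (in_alg L)).

Lemma sum_powq (q : nat) (I : Type) (r : seq I) (G : I -> L) : [pchar L].-nat q ->
  (\sum_(i <- r) G i) ^+ q = \sum_(i <- r) G i ^+ q.
Proof.
move=> pq; elim: r => [|i r IH]; first by rewrite !big_nil expr0n; case: q pq.
by rewrite !big_cons exprDn_pchar // IH.
Qed.

Lemma inalgX (b : F) n : in_alg L (b ^+ n) = (in_alg L b) ^+ n.
Proof. exact: rmorphXn. Qed.
Lemma inalgM (b d : F) : in_alg L (b * d) = (in_alg L b) * in_alg L d.
Proof. exact: rmorphM. Qed.

Lemma dagger_root (q : nat) (f : {poly F}) (a : L) : [pchar L].-nat q ->
  a != 0 -> root (pA f) a -> root (pA (dagger q f)) (a^-1 ^+ q).
Proof.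
move=> pq a0 ra.
have q0 : (0 < q)%N by case: q pq.
set s := size f; set c := (f`_0)^-1.
have szD : (size (pA (dagger q f)) <= s)%N.
  rewrite size_map_poly /dagger /conj_poly /recip.
  apply: leq_trans (size_poly _ _) _.
  apply: leq_trans (size_scale_leq _ _) _; exact: size_poly.
have inner : \sum_(i < s) (f`_(s.-1 - i))%:A * a^-1 ^+ i = 0 :> L.
  have ax : a ^+ s.-1 != 0 by rewrite expf_eq0 (negbTE a0) andbF.
  apply: (mulfI ax); rewrite mulr0 mulr_sumr.
  rewrite (eq_bigr (fun i : 'I_s => (f`_(s.-1 - i))%:A * a ^+ (s.-1 - i))); last first.
    move=> i _; rewrite mulrCA; congr (_ * _).
    have lei : (i <= s.-1)%N by rewrite -ltnS (leq_trans (ltn_ord i)) // leqSpred.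
    by rewrite -{1}(subnK lei) exprD exprVn mulrK // unitfE expf_eq0 (negbTE a0) andbF.
  rewrite (reindex_inj rev_ord_inj) /=.
  rewrite (eq_bigr (fun i : 'I_s => (f`_i)%:A * a ^+ i)); last first.
    move=> i _; have -> : (s.-1 - (s - i.+1) = i)%N.
      have := ltn_ord i; clear; move: (nat_of_ord i) => k; lia.
    done.
  move/eqP: (ra); rewrite horner_coef size_map_poly => ra'; rewrite -[RHS]ra'.
  by apply: eq_bigr => i _; rewrite coef_map.
rewrite /root (horner_coef_wide _ szD).
have -> : \sum_(i < s) (pA (dagger q f))`_i * (a^-1 ^+ q) ^+ i =
   (c%:A * \sum_(i < s) (f`_(s.-1 - i))%:A * a^-1 ^+ i) ^+ q.
  rewrite mulr_sumr sum_powq //; apply: eq_bigr => i _.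
  rewrite (@coef_map_id0 _ _ (in_alg L) _ _ (scale0r _)) /dagger /conj_poly coef_map_id0 ?expr0n ?(gtn_eqF q0) //.
  rewrite /recip coefZ coef_poly ltn_ord.
  rewrite inalgX inalgM !exprMn mulrA -!exprM mulnC.
  reflexivity.
by rewrite inner mulr0 expr0n (gtn_eqF q0).
Qed.
End Frob.


Lemma key (x : int) j : exists S t : int,
  x ^+ (2 * j).+1 + 1 = (x + 1) * S /\ S - ((2 * j).+1)%:R = (x + 1) * t.
Proof.
elim: j => [|j [S [t [H1 H2]]]].
  by exists 1, 0; split; rewrite ?expr1 ?mulr1 ?mulr0 ?subrr.
set a := (2 * j).+1 in H1 H2 *.
have ea : (2 * j.+1).+1 = (a + 2)%N by rewrite /a; lia.
have Ha : x ^+ a = (x + 1) * S - 1 by rewrite -H1; ring.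
have HS : S = (x + 1) * t + a%:R by rewrite -H2; ring.
exists (x ^+ 2 * S - x + 1), (x ^+ 2 * t + a%:R * (x - 1) - 1).
rewrite ea exprD Ha natrD HS; split; ring.
Qed.

Lemma nat_dvd_int (d m : nat) : (d %| m)%N <-> exists c : int, m%:Z = c * d%:Z.
Proof.
have -> : (d %| m)%N = (d%:Z %| m%:Z)%Z by rewrite dvdzE.
by split => [/dvdzP | /dvdzP].
Qed.

Lemma castX (x k : nat) : ((x ^ k)%N : int) = (x : int) ^+ k.
Proof. by rewrite -natz natrX natz. Qed.

Lemma stepA (x m b : nat) : odd b -> (m %| x + 1)%N -> (m %| x ^ b + 1)%N.
Proof.
move=> ob /nat_dvd_int [u Hu]; apply/nat_dvd_int.
have eb : b = (2 * b./2).+1 by rewrite -[LHS](odd_double_half b) ob -mul2n.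
have [S [t [H1 _]]] := key x b./2.
exists (u * S); rewrite PoszD castX eb H1; rewrite PoszD in Hu.
by rewrite Hu; ring.
Qed.

Lemma stepB (x l g : nat) : odd g -> (l %| x + 1)%N -> (g %| x + 1)%N ->
  (l * g %| x ^ g + 1)%N.
Proof.
move=> og /nat_dvd_int [u Hu] /nat_dvd_int [v Hv]; apply/nat_dvd_int.
have eg : g = (2 * g./2).+1 by rewrite -[LHS](odd_double_half g) og -mul2n.
have [S [t [H1 H2]]] := key x g./2.
rewrite -eg in H1 H2.
have HS : S = (x%:Z + 1) * t + g%:R by rewrite -H2; ring.
rewrite PoszD in Hu Hv.
exists (u * (1 + v * t)); rewrite PoszD castX H1 HS PoszM natz.
rewrite {1}Hu Hv; ring.
Qed.

Lemma good_mul (q n1 n2 k1 k2 : nat) : odd n1 -> odd k1 -> odd k2 ->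
  (n1 %| q ^ k1 + 1)%N -> (n2 %| q ^ k2 + 1)%N ->
  exists k, odd k /\ (n1 * n2 %| q ^ k + 1)%N.
Proof.
move=> on1 ok1 ok2 d1 d2.
set Q := (q ^ (k1 * k2))%N.
have D1 : (n1 %| Q + 1)%N by rewrite /Q expnM; apply: stepA.
have D2 : (n2 %| Q + 1)%N by rewrite /Q mulnC expnM; apply: stepA.
set g := gcdn n1 n2.
have og : odd g.
  apply: contraLR on1; rewrite -!dvdn2 => h.
  exact: dvdn_trans h (dvdn_gcdl _ _).
have Dl : (lcmn n1 n2 %| Q + 1)%N by rewrite dvdn_lcm D1 D2.
have Dg : (g %| Q + 1)%N := dvdn_trans (dvdn_gcdl _ _) D1.
exists (k1 * k2 * g)%N; split; first by rewrite !oddM ok1 ok2 og.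
by rewrite -muln_lcm_gcd expnM; apply: stepB.
Qed.


Lemma dagger_monic (F : fieldType) (q : nat) (f : {poly F}) : (0 < q)%N -> f`_0 != 0 ->
  dagger q f \is monic /\ size (dagger q f) = size f.
Proof.
move=> q0 f0.
have s0 : (0 < size f)%N.
  by rewrite size_poly_gt0; apply: contraNneq f0 => ->; rewrite coef0.
set P := \poly_(i < size f) f`_((size f).-1 - i).
have szP : size P = size f by rewrite size_poly_eq // subnn.
have c0 : (f`_0)^-1 != 0 by rewrite invr_eq0.
have lP : lead_coef ((f`_0)^-1 *: P) = 1.
  by rewrite lead_coefZ lead_coefE szP coef_poly prednK // leqnn subnn mulVf.
have h0 : (fun a : F => a ^+ q) 0 = 0 by rewrite /= expr0n gtn_eqF.
have h1 : (fun a : F => a ^+ q) (lead_coef ((f`_0)^-1 *: P)) != 0 by rewrite lP expr1n oner_eq0.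
split.
  by rewrite /dagger /conj_poly /recip monicE lead_coef_map_id0 // lP expr1n.
by rewrite /dagger /conj_poly /recip size_map_poly_id0 // size_scale.
Qed.

Section Main.
Variables (F : finFieldType) (L : splittingFieldType F).
Local Notation pA := (map_poly (in_alg L)).

Lemma toSCRIM (q : nat) (f : {poly F}) (a : L) : [pchar L].-nat q ->
  f \is monic -> irreducible_poly f -> f`_0 != 0 -> a != 0 ->
  root (pA f) a -> root (pA f) (a^-1 ^+ q) -> f = dagger q f.
Proof.
move=> pq mf irf f0 a0 ra rb.
have q0 : (0 < q)%N by move: pq; rewrite /pnat => /andP[].
have rD := dagger_root pq a0 ra.
have [mD szD] := dagger_monic q0 f0.
have := minP mf irf rb => mb.
have : pA f %| pA (dagger q f).
  rewrite -mb; apply: minPoly_dvdp => //; apply/polyOver1P; by exists (dagger q f).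
rewrite dvdp_map => dv.
apply/eqP; by rewrite -eqp_monic // -(dvdp_size_eqp dv) szD.
Qed.

Lemma pchar_nat (q : nat) : prime_power q -> #|F| = (q ^ 2)%N -> [pchar L].-nat q.
Proof.
move=> [p [k [pp k0 ->]]] cF.
have pF : p \in [pchar F] by apply: (card_finPcharP (n := (k * 2)%N)) => //; rewrite cF expnM.
have pL : p \in [pchar L] by rewrite pchar_lalg.
by rewrite (eq_pnat _ (pcharf_eq pL)) pnatX pnat_id.
Qed.
End Main.

Lemma pA_Xn (F : fieldType) (L : fieldExtType F) n :
  map_poly (in_alg L) ('X^n - 1) = 'X^n - 1.
Proof. by rewrite rmorphB /= map_polyXn rmorph1. Qed.

Lemma good_SCRIM (F : finFieldType) q n k : prime_power q -> #|F| = (q ^ 2)%N ->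
  (0 < n)%N -> odd k -> (n %| q ^ k + 1)%N -> all_factors_SCRIM F q n.
Proof.
move=> ppq cF n0 ok dvk f mf irf dvf.
have f0' : f != 0 := irredp_neq0 irf.
case: (FinSplittingFieldFor f0') => L [rs Df _].
have pq := pchar_nat L ppq cF.
have [a ra] : exists a, root (map_poly (in_alg L) f) a.
  case: rs Df => [|a rs] Df.
    move: (eqp_size Df); rewrite big_nil size_map_poly size_poly1 => e.
    by move: (irf.1); rewrite e.
  by exists a; rewrite (eqp_root Df) root_prod_XsubC mem_head.
have an : a ^+ n = 1.
  have dv : map_poly (in_alg L) f %| map_poly (in_alg L) ('X^n - 1) by rewrite dvdp_map.
  have := root_dvdp dv ra; rewrite pA_Xn.
  by rewrite /root !hornerE subr_eq0 => /eqP.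
have a0 : a != 0 by apply: contra_eq_neq an => ->; rewrite expr0n gtn_eqF // eq_sym oner_eq0.
have f0 : f`_0 != 0.
  apply/negP => /eqP e; have : root f 0 by rewrite /root horner_coef0 e.
  move/(root_dvdp dvf); rewrite /root !hornerE expr0n gtn_eqF //.
  by rewrite sub0r oppr_eq0 oner_eq0.
have rb : root (map_poly (in_alg L) f) (a^-1 ^+ q).
  have e1 : a ^+ (q ^ k) = a^-1.
    have [c Dc] := dvdnP dvk.
    apply: (mulIf a0); rewrite mulVf // -exprSr -addn1 Dc mulnC exprM an expr1n //.
  have -> : a^-1 ^+ q = a ^+ (#|F| ^ (k./2).+1).
    rewrite cF -expnM -e1 -exprM -expnSr; congr (a ^+ (q ^ _)).
    rewrite -[in LHS](odd_double_half k) ok -mul2n /=; lia.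
  exact: root_pow.
split => //; exact: (toSCRIM pq mf irf f0 a0 ra rb).
Qed.

Lemma pchar_ex (F : finFieldType) (L : splittingFieldType F) q : prime_power q -> #|F| = (q ^ 2)%N ->
  exists p, [/\ p \in [pchar L], prime p & (p %| q)%N].
Proof.
move=> [p [k [pp k0 ->]]] cF.
have pF : p \in [pchar F] by apply: (card_finPcharP (n := (k * 2)%N)) => //; rewrite cF expnM.
exists p; split => //; first by rewrite pchar_lalg.
by rewrite dvdn_exp.
Qed.

Lemma SCRIM_good (F : finFieldType) q n : prime_power q -> #|F| = (q ^ 2)%N ->
  (0 < n)%N -> coprime n q -> all_factors_SCRIM F q n ->
  exists k, odd k /\ (n %| q ^ k + 1)%N.
Proof.
move=> ppq cF n0 cnq H.
have Xn0 : ('X^n - 1 : {poly F}) != 0 by rewrite -size_poly_gt0 size_Xn_sub_1.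
case: (FinSplittingFieldFor Xn0) => L [rs Df _].
rewrite pA_Xn in Df.
have pq := pchar_nat L ppq cF.
have [p [pL pp pdq]] := pchar_ex L ppq cF.
have nL : n%:R != 0 :> L.
  rewrite -(dvdn_pcharf pL); apply/negP => pdn.
  have : (p %| gcdn n q)%N by rewrite dvdn_gcd pdn.
  by rewrite (eqP cnq) dvdn1 => /eqP p1; move: pp; rewrite p1.
have E : 'X^n - 1 = \prod_(z <- rs) ('X - z%:P).
  by apply/eqP; rewrite -eqp_monic ?monic_Xn_sub_1 ?monic_prod_XsubC.
have urs : uniq rs by rewrite -separable_prod_XsubC -E separable_Xn_sub_1.
have szrs : size rs = n.
  by apply/eqP; rewrite -eqSS -(size_prod_XsubC rs id) -E size_Xn_sub_1.
have allr : all n.-unity_root rs.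
  apply/allP => z zr; have : root ('X^n - 1) z by rewrite E root_prod_XsubC.
  by rewrite unity_rootE /root !hornerE subr_eq0.
have /hasP [z _ prz] := has_prim_root n0 allr urs (eq_leq (esym szrs)).
have [g Dg] := polyOver1P (minPolyOver 1 z).
have mg : g \is monic by rewrite -(map_monic (in_alg L)) -Dg monic_minPoly.
have irg : irreducible_poly g.
  split; first by rewrite -(size_map_poly (in_alg L)) -Dg size_minPoly.
  move=> h h1 dh.
  have dh' : map_poly (in_alg L) h %| minPoly 1 z by rewrite Dg dvdp_map.
  have hO : map_poly (in_alg L) h \is a polyOver 1%VS by apply/polyOver1P; exists h.
  have /orP [] := minPoly_irr hO dh'.
    by rewrite Dg eqp_map.
  move/eqp_size; rewrite size_map_poly size_poly1 => e; by rewrite e in h1.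
have zn : z ^+ n = 1 := prim_expr_order prz.
have dvg : g %| 'X^n - 1.
  rewrite -(dvdp_map (in_alg L)) pA_Xn -Dg; apply: minPoly_dvdp.
    by apply/polyOver1P; exists ('X^n - 1); rewrite pA_Xn.
  by rewrite /root !hornerE zn subrr.
have [_ _ g0 Eg] := H g mg irg dvg.
have rz : root (map_poly (in_alg L) g) z by rewrite -Dg root_minPoly.
have z0 : z != 0 by apply: contra_eq_neq zn => ->; rewrite expr0n gtn_eqF // eq_sym oner_eq0.
have rD := dagger_root pq z0 rz; rewrite -Eg in rD.
have [j e] := conj_roots mg irg rz rD.
have dj : (n %| #|F| ^ j + q)%N.
  by rewrite (prim_order_dvd prz) exprD -e -exprMn mulVf // expr1n.
rewrite cF in dj; clear e; case: j dj => [|j] dj.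
  by exists 1%N; split => //; rewrite expn1 addnC.
exists (2 * j).+1; split; first by rewrite /= mul2n odd_double.
have E2 : ((q ^ 2) ^ j.+1 + q = q * (q ^ (2 * j).+1 + 1))%N.
  by rewrite -expnM mulnS add2n expnS mulnDr muln1.
by rewrite E2 (Gauss_dvdr _ cnq) in dj.
Qed.


Unset Implicit Arguments.

Theorem theorem2p12 (q : nat) (F : finFieldType) (n1 n2 : nat) :
  prime_power q -> #|F| = (q ^ 2)%N ->
  odd n1 -> odd n2 -> coprime n1 q -> coprime n2 q ->
  all_factors_SCRIM F q n1 -> all_factors_SCRIM F q n2 ->
  all_factors_SCRIM F q (n1 * n2).
Proof.
move=> ppq cF o1 o2 c1 c2 H1 H2.
have p1 : (0 < n1)%N by case: n1 o1 {c1 H1}.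
have p2 : (0 < n2)%N by case: n2 o2 {c2 H2}.
have [k1 [ok1 d1]] := SCRIM_good ppq cF p1 c1 H1.
have [k2 [ok2 d2]] := SCRIM_good ppq cF p2 c2 H2.
have [k [ok d]] := good_mul o1 ok1 ok2 d1 d2.
have p12 : (0 < n1 * n2)%N by rewrite muln_gt0 p1 p2.
exact: (good_SCRIM ppq cF p12 ok d).
Qed.
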